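(* Assume (A1)–(A2) and $N\geq \max\{1,\|f\|_\infty/2\}$. Then the semi-discrete policy iteration process described in the context is well-defined, that is, there are Lipschitz continuous functions $v_n^h,\alpha_n$ satisfying its equations for all $n\ge0$, and the functions $v_n^h$ are uniformly bounded for all $n\geq 0$ and $h>0$.
   Context: Let $d,m\ge1$, $T\ge 1$, $A\subset\mathbb{R}^m$ compact, $c:[0,T]\times\mathbb{R}^d\times A\to\mathbb{R}$, $f:[0,T]\times\mathbb{R}^d\times A\to\mathbb{R}^d$, $q:\mathbb{R}^d\to\mathbb{R}$. Let $\alpha(t,x,p)=\operatorname{argmin}_{a\in A}[c(t,x,a)+p\cdot f(t,x,a)]$, assumed to be the unique minimizer. Assumptions: (A1) $c,f,q$ are uniformly bounded and Lipschitz continuous in all their variables; (A2) $\alpha(\cdot,\cdot,\cdot)$ and a given continuous initial policy $\alpha_0:\mathbb{R}\times\mathbb{R}^d\to A$ are uniformly Lipschitz continuous in all their variables. $\|f\|_\infty=\sup|f|$. For $\varphi:\mathbb{R}^d\to\mathbb{R}$, $h\in(0,1)$: $\nabla^h\varphi(x)=\big(\frac{\varphi(x+he_i)-\varphi(x-he_i)}{2h}\big)_{i=1}^d$, $\Delta^h\varphi(x)=\sum_{i=1}^d\frac{\varphi(x+he_i)-2\varphi(x)+\varphi(x-he_i)}{h^2}$ (acting in $x$). Semi-discrete policy iteration: for $n=0,1,\dots$, $v_n^h$ solves $\partial_t v_n^h+c(t,x,\alpha_n(t,x))+\nabla^h v_n^h\cdot f(t,x,\alpha_n(t,x))=-Nh\Delta^h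 v_n^h$ in $(0,T)\times\mathbb{R}^d$, $v_n^h(T,x)=q(x)$ on $\mathbb{R}^d$, and then $\alpha_{n+1}(t,x)=\alpha(t,x,\nabla^h v_n^h(t,x))$ in $(0,T)\times\mathbb{R}^d$. *)

(* Defs.v *)
From mathcomp Require Import all_boot all_order all_algebra.
From mathcomp Require Import all_classical all_reals all_analysis.
Set Implicit Arguments. Unset Strict Implicit. Unset Printing Implicit Defensive.
Import Order.TTheory GRing.Theory Num.Theory.
Import numFieldNormedType.Exports.
Local Open Scope ring_scope.

Section Defs.
Context {R : realType}.

Definition ev {d : nat} (i : 'I_d) : 'rV[R]_d := delta_mx 0 i.

Definition dotv {d : nat} (p q : 'rV[R]_d) : R := \sum_(i < d) p 0 i * q 0 i.
Definition eucl {d : nat} (p : 'rV[R]_d) : R := Num.sqrt (dotv p p).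

Definition dgrad {d : nat} (h : R) (phi : 'rV[R]_d -> R) (x : 'rV[R]_d) : 'rV[R]_d :=
  \row_(i < d) ((phi (x + h *: ev i) - phi (x - h *: ev i)) / (2 * h)).

Definition dlap {d : nat} (h : R) (phi : 'rV[R]_d -> R) (x : 'rV[R]_d) : R :=
  \sum_(i < d) ((phi (x + h *: ev i) - 2 * phi x + phi (x - h *: ev i)) / h ^+ 2).

Definition lip1 {U V : normedModType R} (g : U -> V) : Prop :=
  exists k : R, forall x y, `|g x - g y| <= k * `|x - y|.

Definition lip2 {U V : normedModType R} (D : R -> Prop) (g : R -> U -> V) : Prop :=
  exists k : R, forall t s x y, D t -> D s ->
    `|g t x - g s y| <= k * (`|t - s| + `|x - y|).

Definition lip3 {U W V : normedModType R} (D1 : R -> Prop) (D3 : W -> Prop)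
  (g : R -> U -> W -> V) : Prop :=
  exists k : R, forall t s x y a b, D1 t -> D1 s -> D3 a -> D3 b ->
    `|g t x a - g s y b| <= k * (`|t - s| + `|x - y| + `|a - b|).

Definition bnd3 {U W V : normedModType R} (D1 : R -> Prop) (D3 : W -> Prop)
  (g : R -> U -> W -> V) : Prop :=
  exists M : R, forall t x a, D1 t -> D3 a -> `|g t x a| <= M.

End Defs.

(* Main.v *)
Require Import Defs.
From mathcomp Require Import all_boot all_order all_algebra.
From mathcomp Require Import all_classical all_reals all_analysis.
From mathcomp Require Import ring lra.
Import Order.TTheory GRing.Theory Num.Theory.
Import numFieldNormedType.Exports.
Local Open Scope ring_scope.

Section PA.
Context {R : realType}.

Definition cl (T t : R) : R := Num.min (Num.max t 0) T.

Lemma cl_in T t : 0 <= T -> 0 <= cl T t <= T.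
Proof.
move=> T0; rewrite /cl; apply/andP; split.
  by rewrite le_min T0 le_max lexx orbT.
by rewrite ge_min lexx orbT.
Qed.

Lemma cl_id T t : 0 <= t <= T -> cl T t = t.
Proof.
move=> /andP[t0 tT]; rewrite /cl.
by rewrite (max_idPl t0) (min_idPl tT).
Qed.

Lemma cl_cl T t : 0 <= T -> cl T (cl T t) = cl T t.
Proof. by move=> T0; rewrite cl_id // cl_in. Qed.

Lemma nrm_le (X Y : R) : -`|Y| <= X <= `|Y| -> `|X| <= `|Y|.
Proof. by rewrite ler_norml. Qed.

Lemma max_lip (a b c : R) : `|Num.max a c - Num.max b c| <= `|a - b|.
Proof.
have [ac|ac] := leP a c; have [bc|bc] := leP b c;
rewrite ?(max_idPr ac) ?(max_idPr bc) ?(max_idPl (ltW ac)) ?(max_idPl (ltW bc));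
apply: nrm_le; have [Y0|Y0] := lerP 0 (a - b);
rewrite ?(ger0_norm Y0) ?(ltr0_norm Y0); apply/andP; split; lra.
Qed.

Lemma min_lip (a b c : R) : `|Num.min a c - Num.min b c| <= `|a - b|.
Proof.
have [ac|ac] := leP a c; have [bc|bc] := leP b c;
rewrite ?(min_idPl ac) ?(min_idPl bc) ?(min_idPr (ltW ac)) ?(min_idPr (ltW bc));
apply: nrm_le; have [Y0|Y0] := lerP 0 (a - b);
rewrite ?(ger0_norm Y0) ?(ltr0_norm Y0); apply/andP; split; lra.
Qed.

Lemma cl_lip T t s : `|cl T t - cl T s| <= `|t - s|.
Proof. exact: le_trans (min_lip _ _ _) (max_lip _ _ _). Qed.

Lemma lip_cont (F : R -> R) L : 0 <= L ->
  (forall s t, `|F s - F t| <= L * `|s - t|) -> continuous F.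
Proof.
move=> L0 HF x; apply/cvgrPdist_lt => e e0.
have L1 : 0 < L + 1 by lra.
near=> y.
apply: (le_lt_trans (HF _ _)).
have : `|x - y| < e / (L + 1).
  near: y; apply/nbhs_ballP; exists (e / (L + 1)) => /=.
    by rewrite divr_gt0.
  by move=> z; rewrite /ball /=.
rewrite ltr_pdivlMr // => h.
apply: le_lt_trans h; have := normr_ge0 (x - y); nra.
Unshelve. all: by end_near.
Qed.

Lemma cmp_deriv (F dF : R -> R) a b : a <= b ->
  (forall s, a <= s <= b -> {for s, continuous F}) ->
  (forall s, a < s < b -> is_derive s 1 F (dF s)) ->
  (forall s, a < s < b -> dF s <= 0) -> F b <= F a.
Proof.
move=> ab Fc Fd Fn.
have [ab'|ab'] := eqVneq a b; first by rewrite ab'.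
have altb : a < b by rewrite lt_neqAle ab' ab.
have H1 : forall x, x \in `]a, b[%R -> is_derive x 1 F (dF x).
  by move=> x; rewrite in_itv /= => /Fd.
have H2 : {within `[a, b], continuous F}%classic.
  apply: continuous_in_subspaceT => x; rewrite inE /= in_itv /= => /Fc //.
have [c cab E] := @MVT R F dF a b altb H1 H2.
rewrite -subr_le0 E.
apply: mulr_le0_ge0; last by lra.
by apply: Fn; move: cab; rewrite in_itv /=.
Qed.

Definition Prim (g : R -> R) (t : R) : R :=
  (\int[lebesgue_measure]_(s in `[-1, t]) g s)%R.

Lemma Prim_deriv (g : R -> R) (t : R) : continuous g -> -1 < t -> is_derive t 1 (Prim g) (g t).
Proof.
move=> gc t1.
have tt : t < t + 1 by lra.
have [] := @continuous_FTC1_closed R g (-1) t (t + 1) tt _ t1 (gc t).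
  apply: continuous_compact_integrable; first exact: segment_compact.
  exact: continuous_subspaceT.
move=> /derivableP H; rewrite derive1E => E.
by rewrite /Prim -E.
Qed.

Lemma Prim_cont (g : R -> R) (t : R) : continuous g -> -1 < t -> {for t, continuous (Prim g)}.
Proof.
move=> gc t1; have H := @Prim_deriv g t gc t1.
apply: differentiable_continuous; apply/derivable1_diffP.
by apply: ex_derive.
Qed.

Lemma is_derive_expk (k t : R) :
  is_derive t 1 (fun s => expR (k * s)) (k * expR (k * t)).
Proof.
have H1 : is_derive t 1 (fun s : R => k * s) k.
  have := @is_deriveZ R R R id k t 1 1 (is_derive_id _ _).
  by rewrite /GRing.scale /= mulr1.
have := is_derive1_comp (is_derive_expR (k * t)) H1.
by rewrite mulrC.
Qed.

Lemma dM {f g : R -> R} {x df dg : R} : is_derive x (1:R) f df -> is_derive x (1:R) g dg ->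
  is_derive x (1:R) (fun u => f u * g u) (f x * dg + g x * df).
Proof. move=> H1 H2; exact: is_deriveM H1 H2. Qed.
Lemma dD {f g : R -> R} {x df dg : R} : is_derive x (1:R) f df -> is_derive x (1:R) g dg ->
  is_derive x (1:R) (fun u => f u + g u) (df + dg).
Proof. move=> H1 H2; exact: is_deriveD H1 H2. Qed.
Lemma dN {f : R -> R} {x df : R} : is_derive x (1:R) f df ->
  is_derive x (1:R) (fun u => - f u) (- df).
Proof. move=> H1; exact: is_deriveN H1. Qed.
Lemma dB {f g : R -> R} {x df dg : R} : is_derive x (1:R) f df -> is_derive x (1:R) g dg ->
  is_derive x (1:R) (fun u => f u - g u) (df - dg).
Proof. move=> H1 H2; have := @dD f (fun u => - g u) x df (- dg) H1 (@dN g x dg H2); exact. Qed.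
Lemma dC (a : R) x : is_derive x (1:R) (fun u : R => a) 0.
Proof. exact: is_derive_cst. Qed.
Lemma dI x : is_derive x (1:R) (fun u : R => u) 1.
Proof. exact: is_derive_id. Qed.
Lemma d_cont {f : R -> R} {x df : R} : is_derive x (1:R) f df -> {for x, continuous f}.
Proof.
move=> H; apply: differentiable_continuous; apply/derivable1_diffP.
by apply: ex_derive.
Qed.

Lemma cD {f g : R -> R} {x : R} : {for x, continuous f} -> {for x, continuous g} ->
  {for x, continuous (fun u => f u + g u)}.
Proof. move=> H1 H2; exact: continuousD H1 H2. Qed.
Lemma cM {f g : R -> R} {x : R} : {for x, continuous f} -> {for x, continuous g} ->
  {for x, continuous (fun u => f u * g u)}.
Proof. move=> H1 H2; exact: continuousM H1 H2. Qed.
Lemma cN {f : R -> R} {x : R} : {for x, continuous f} ->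
  {for x, continuous (fun u => - f u)}.
Proof. move=> H1; exact: continuousN H1. Qed.
Lemma cB {f g : R -> R} {x : R} : {for x, continuous f} -> {for x, continuous g} ->
  {for x, continuous (fun u => f u - g u)}.
Proof. move=> H1 H2; exact: continuousB H1 H2. Qed.
Lemma cC (k : R) (x : R) : {for x, continuous (fun _ : R => k)}.
Proof. exact: cst_continuous. Qed.
Lemma cO {f g : R -> R} {x : R} : {for x, continuous f} -> {for (f x), continuous g} ->
  {for x, continuous (fun u => g (f u))}.
Proof. move=> H1 H2; exact: continuous_comp H1 H2. Qed.
Lemma cS n (F : 'I_n -> R -> R) (x : R) : (forall i, {for x, continuous (F i)}) ->
  {for x, continuous (fun u => \sum_(i < n) F i u)}.
Proof.
elim: n F => [|n IH] F HF.
  have -> : (fun u => \sum_(i < 0) F i u) = (fun _ => 0).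
    by apply/funext => u; rewrite big_ord0.
  exact: cC.
have -> : (fun u => \sum_(i < n.+1) F i u) =
   (fun u => \sum_(i < n) F (widen_ord (leqnSn n) i) u + F ord_max u).
  by apply/funext => u; rewrite big_ord_recr.
apply: cD; last exact: HF.
by apply: IH => i; exact: HF.
Qed.
Lemma cl_cont T : continuous (cl T).
Proof.
apply: (@lip_cont _ 1) => //; move=> s t; rewrite mul1r; exact: cl_lip.
Qed.

End PA.

Section PB.
Context {R : realType}.

Lemma est (lam T t Q0 Q1 C0 q0 : R) (J G1 : R -> R) :
  0 < lam -> 0 <= t <= T -> 0 <= C0 -> `|q0| <= Q0 -> Q0 <= Q1 ->
  (forall s, t <= s <= T -> {for s, continuous J}) ->
  (forall s, t < s < T -> is_derive s 1 J (expR (- lam * s) * G1 s)) ->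
  (forall s, t < s < T -> `|G1 s| <= C0 + lam * (Q1 + (T - s) * C0)) ->
  `|expR (lam * t) * (expR (- lam * T) * q0 + (J T - J t))|
    <= Q1 + (T - t) * C0 - expR (- lam * (T - t)) * (Q1 - Q0).
Proof.
move=> lam0 /andP[t0 tT] C00 q0Q Q01 Jc Jd GB.
pose H := fun u : R => - expR (- lam * u) * (Q1 + (T - u) * C0).
have dH : forall s : R, is_derive s 1 H
    (expR (- lam * s) * (lam * (Q1 + (T - s) * C0) + C0)).
  move=> s; rewrite /H; eapply is_derive_eq.
    eapply dM; first by eapply dN; exact: is_derive_expk.
    eapply dD; first exact: dC.
    eapply dM; [eapply dB; [exact: dC| exact: dI] | exact: dC].
  rewrite /=; ring.
have Hc : forall s : R, {for s, continuous H} by move=> s; exact: d_cont (dH s).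
have K1 : J T - H T <= J t - H t.
  apply: (@cmp_deriv _ (fun s => J s - H s) (fun s => expR (- lam * s) * G1 s -
     expR (- lam * s) * (lam * (Q1 + (T - s) * C0) + C0)) t T) => //.
  - move=> s /andP[ts sT]; apply: continuousB; [apply: Jc; lra | exact: Hc].
  - move=> s /andP[ts sT]; eapply dB; [apply: Jd; lra| exact: dH].
  - move=> s /andP[ts sT]; rewrite -mulrBr; apply: mulr_ge0_le0.
      exact/ltW/expR_gt0.
    have := GB s; rewrite ts sT => /(_ isT); have := ler_norm (G1 s); lra.
have K2 : - J T - H T <= - J t - H t.
  apply: (@cmp_deriv _ (fun s => - J s - H s) (fun s => - (expR (- lam * s) * G1 s) -
     expR (- lam * s) * (lam * (Q1 + (T - s) * C0) + C0)) t T) => //.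
  - move=> s /andP[ts sT]; apply: continuousB; last exact: Hc.
    apply: continuousN; apply: Jc; lra.
  - move=> s /andP[ts sT]; eapply dB; [eapply dN; apply: Jd; lra| exact: dH].
  - move=> s /andP[ts sT]; rewrite -mulrN -mulrBr; apply: mulr_ge0_le0.
      exact/ltW/expR_gt0.
    have := GB s; rewrite ts sT => /(_ isT).
    have : - G1 s <= `|G1 s| by rewrite -normrN ler_norm.
    lra.
have eT0 := expR_gt0 (- lam * T).
have et0 := expR_gt0 (lam * t).
have E1 : expR (- lam * (T - t)) = expR (lam * t) * expR (- lam * T).
  by rewrite -expRD; congr expR; ring.
have E2 : expR (lam * t) * expR (- lam * t) = 1.
  by rewrite -expRD -expR0; congr expR; ring.
rewrite E1 normrM (gtr0_norm et0).
set a := expR (lam * t) in et0 E1 E2 *.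
set b := expR (- lam * T) in eT0 E1 *.
set c := expR (- lam * t) in E2 K1 K2.
have Hq : `|b * q0| <= b * Q0 by rewrite normrM (gtr0_norm eT0) ler_wpM2l // ltW.
have HX : `|J T - J t| <= H T - H t.
  rewrite ler_norml; apply/andP; split; lra.
have Y : `|b * q0 + (J T - J t)| <= b * Q0 + (H T - H t).
  by apply: le_trans (ler_normD _ _) _; apply: lerD.
apply: le_trans (ler_wpM2l (ltW et0) Y) _.
rewrite /H /= -/b -/c subrr mul0r addr0.
have -> : a * (b * Q0 + (- b * Q1 - - c * (Q1 + (T - t) * C0)))
   = a * b * (Q0 - Q1) + (a * c) * (Q1 + (T - t) * C0) by ring.
rewrite E2 mul1r; lra.
Qed.

End PB.

Section PS.
Context {R : realType}.
Local Open Scope classical_set_scope.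
Local Open Scope ring_scope.

Lemma geo_small (th c e : R) : 0 <= th < 1 -> 0 < c -> 0 < e ->
  exists k : nat, c * th ^+ k < e.
Proof.
move=> /andP[t0 t1] c0 e0.
have hth : `|th| < 1 by rewrite ger0_norm.
have := @cvg_expr R th hth.
move=> /cvgrPdist_lt /(_ (e / c)) [].
  by rewrite divr_gt0.
move=> N _ HN; exists N; have := HN N (leqnn N); rewrite /= sub0r normrN.
rewrite ger0_norm ?exprn_ge0 // ltr_pdivlMr // mulrC //.
Qed.

Lemma lim_le (X B c th : R) : 0 <= th < 1 ->
  (forall k : nat, X <= B + c * th ^+ k) -> X <= B.
Proof.
move=> tht H; apply/ler_addgt0Pr => e e0.
have [c0|c0] := lerP c 0.
  apply: le_trans (H 0%N) _; rewrite expr0 mulr1; lra.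
have [k Hk] := @geo_small th c e tht c0 e0.
apply: le_trans (H k) _; lra.
Qed.

Lemma geo_lim (y : nat -> R) (C th : R) : 0 <= th < 1 -> 0 <= C ->
  (forall k, `|y k.+1 - y k| <= C * th ^+ k) ->
  forall k, `|limn y - y k| <= C * th ^+ k / (1 - th).
Proof.
move=> /andP[t0 t1] C0 Hy.
have t1' : 0 < 1 - th by lra.
pose e := fun k : nat => C / (1 - th) * th ^+ k.
have eS : forall k, e k.+1 = e k - C * th ^+ k.
  move=> k; rewrite /e exprS; field; lra.
have e0 : forall k, 0 <= e k.
  by move=> k; rewrite /e mulr_ge0 ?divr_ge0 ?exprn_ge0 // ltW.
pose z := fun k => y k + e k.
pose w := fun k => y k - e k.
have zdec : {homo z : n m / (n <= m)%N >-> (m <= n)}.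
  apply/nonincreasing_seqP => k; rewrite /z eS.
  have := Hy k; rewrite ler_norml => /andP[_ H]; lra.
have winc : {homo w : n m / (n <= m)%N >-> (n <= m)}.
  apply/nondecreasing_seqP => k; rewrite /w eS.
  have := Hy k; rewrite ler_norml => /andP[H _]; lra.
have zlb : has_lbound (range z).
  exists (w 0%N) => _ [k _ <-]; apply: le_trans (winc _ _ (leq0n k)) _.
  by rewrite /w /z; have := e0 k; lra.
have zc := nonincreasing_cvgn zdec zlb.
set l := inf (range z) in zc.
have ec : e @ \oo --> (0 : R).
  have -> : (0 : R) = C / (1 - th) * 0 by rewrite mulr0.
  apply: cvgMr; apply: cvg_expr; rewrite ger0_norm //.
have yc : y @ \oo --> l.
  have -> : y = z - e by apply/funext => k; rewrite /z /= addrK.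
  by rewrite -[l]subr0; apply: cvgB.
have wc : w @ \oo --> l.
  by rewrite -[l]subr0; apply: cvgB.
have ly : limn y = l by apply: cvg_lim.
have lw : limn w = l by apply: cvg_lim.
have lz : limn z = l by apply: cvg_lim.
move=> k.
have H1 := nonincreasing_cvgn_ge zdec (cvgP _ zc) k.
have H2 := nondecreasing_cvgn_le winc (cvgP _ wc) k.
rewrite lz /z in H1; rewrite lw /w in H2.
rewrite ly ler_norml; apply/andP; split.
  have -> : C * th ^+ k / (1 - th) = e k by rewrite /e; field; lra.
  lra.
have -> : C * th ^+ k / (1 - th) = e k by rewrite /e; field; lra.
lra.
Qed.

End PS.

Section PC.
Context {R : realType} {d : nat}.
Variables (T N h Q Lq Ma La Lb : R).
Variables (a : R -> 'rV[R]_d -> R) (b : R -> 'rV[R]_d -> 'rV[R]_d)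
  (q : 'rV[R]_d -> R).
Hypotheses (T0 : 0 <= T) (N0 : 0 < N) (h0 : 0 < h) (d0 : (0 < d)%N)
  (Q0 : 0 <= Q) (Lq0 : 0 <= Lq) (Ma0 : 0 <= Ma) (La0 : 0 <= La) (Lb0 : 0 <= Lb).
Hypothesis qB : forall x, `|q x| <= Q.
Hypothesis qL : forall x y, `|q x - q y| <= Lq * `|x - y|.
Hypothesis aB : forall s x, `|a s x| <= Ma.
Hypothesis aL : forall s s' x x', `|a s x - a s' x'| <= La * (`|s - s'| + `|x - x'|).
Hypothesis bB : forall s x i, `|b s x 0 i| <= 2 * N.
Hypothesis bL : forall s s' x x' i,
  `|b s x 0 i - b s' x' 0 i| <= Lb * (`|s - s'| + `|x - x'|).

Local Ltac lra' := have := T0; have := N0; have := h0; have := Q0; have := Lq0;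
  have := Ma0; have := La0; have := Lb0; lra.

Definition pp s x (i : 'I_d) := N / h + b s x 0 i / (2 * h).
Definition pm s x (i : 'I_d) := N / h - b s x 0 i / (2 * h).
Definition Pop s x (u : 'rV[R]_d -> R) :=
  \sum_(i < d) (pp s x i * u (x + h *: ev i) + pm s x i * u (x - h *: ev i)).
Definition lam := (2 * N / h) *+ d.
Definition Gw (w : R -> 'rV[R]_d -> R) s x := a s x + Pop s x (w s).
Definition gint w x s := expR (- lam * s) * Gw w s x.
Definition Phi w t x := expR (lam * cl T t) *
  (expR (- lam * T) * q x + (Prim (gint w x) T - Prim (gint w x) (cl T t))).
Definition Mw := Q + T * Ma.
Definition S := La + (Lb * Mw / h) *+ d.
Definition Lt := lam * Mw *+ 2 + Ma.
Definition th := 1 - expR (- lam * T).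

Lemma eqle (x y : R) : x = y -> x <= y. Proof. by move=> ->. Qed.

Lemma h2 : 0 < 2 * h. Proof. move: h0; lra'. Qed.

Lemma pp_ge0 s x i : 0 <= pp s x i.
Proof.
rewrite /pp; have -> : N / h + b s x 0 i / (2 * h) = (2 * N + b s x 0 i) / (2 * h).
  by field; rewrite gt_eqF.
apply: divr_ge0; last by lra'.
have := bB s x i; rewrite ler_norml => /andP[H1 H2]; lra'.
Qed.

Lemma pm_ge0 s x i : 0 <= pm s x i.
Proof.
rewrite /pm; have -> : N / h - b s x 0 i / (2 * h) = (2 * N - b s x 0 i) / (2 * h).
  by field; rewrite gt_eqF.
apply: divr_ge0; last by lra'.
have := bB s x i; rewrite ler_norml => /andP[H1 H2]; lra'.
Qed.

Lemma ppm s x i : pp s x i + pm s x i = 2 * N / h.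
Proof. rewrite /pp /pm; ring. Qed.

Lemma lam_gt0 : 0 < lam.
Proof.
rewrite /lam; case: d d0 => // n _; rewrite mulrS.
have : 0 < 2 * N / h by apply: divr_gt0; lra'.
have : 0 <= (2 * N / h) *+ n by apply: mulrn_wge0; apply: divr_ge0; lra'.
lra'.
Qed.

Lemma sum_const_lam (D : R) : lam * D = \sum_(i < d) (2 * N / h * D).
Proof. by rewrite sumr_const card_ord /lam mulrnAl. Qed.

Lemma Pop_bound s x u D : (forall z, `|u z| <= D) -> `|Pop s x u| <= lam * D.
Proof.
move=> uD; rewrite /Pop sum_const_lam.
apply: le_trans (ler_norm_sum _ _ _) _; apply: ler_sum => i _.
apply: le_trans (ler_normD _ _) _.
rewrite !normrM (ger0_norm (pp_ge0 _ _ _)) (ger0_norm (pm_ge0 _ _ _)).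
rewrite -(ppm s x i) [X in _ <= X]mulrDl;  apply: lerD; apply: ler_wpM2l;
  by rewrite ?pp_ge0 ?pm_ge0 ?uD.
Qed.

Lemma Pop_sub s x u u' : Pop s x u - Pop s x u' = Pop s x (fun z => u z - u' z).
Proof. rewrite /Pop -sumrB; apply: eq_bigr => i _; ring. Qed.

Lemma ppL s x y i : `|pp s x i - pp s y i| <= Lb * `|x - y| / (2 * h).
Proof.
have -> : pp s x i - pp s y i = (b s x 0 i - b s y 0 i) / (2 * h).
  by rewrite /pp; field; lra'.
rewrite normrM [`|(2 * h)^-1|]ger0_norm; last by rewrite invr_ge0 ltW // h2.
apply: ler_wpM2r; first by rewrite invr_ge0; lra'.
by have := bL s s x y i; rewrite subrr normr0 add0r.
Qed.

Lemma pmL s x y i : `|pm s x i - pm s y i| <= Lb * `|x - y| / (2 * h).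
Proof.
have -> : pm s x i - pm s y i = - ((b s x 0 i - b s y 0 i) / (2 * h)).
  by rewrite /pm; field; lra'.
rewrite normrN normrM [`|(2 * h)^-1|]ger0_norm; last by rewrite invr_ge0 ltW // h2.
apply: ler_wpM2r; first by rewrite invr_ge0; lra'.
by have := bL s s x y i; rewrite subrr normr0 add0r.
Qed.

Lemma Pop_lipx s x y u D Mu :
  (forall z, `|u (x + z) - u (y + z)| <= D) -> (forall z, `|u z| <= Mu) ->
  `|Pop s x u - Pop s y u| <= lam * D + (Lb * Mu / h) *+ d * `|x - y|.
Proof.
move=> uD uM; rewrite /Pop -sumrB sum_const_lam.
have -> : (Lb * Mu / h) *+ d * `|x - y| = \sum_(i < d) (Lb * Mu / h * `|x - y|).
  by rewrite sumr_const card_ord mulrnAl.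
rewrite -big_split /=.
apply: le_trans (ler_norm_sum _ _ _) _; apply: ler_sum => i _.
set xp := x + h *: ev i; set xm := x - h *: ev i.
set yp := y + h *: ev i; set ym := y - h *: ev i.
have -> : pp s x i * u xp + pm s x i * u xm - (pp s y i * u yp + pm s y i * u ym)
  = pp s x i * (u xp - u yp) + pm s x i * (u xm - u ym)
    + ((pp s x i - pp s y i) * u yp + (pm s x i - pm s y i) * u ym) by ring.
apply: le_trans (ler_normD _ _) _.
have Mu0 : 0 <= Mu by apply: le_trans (uM 0); exact: normr_ge0.
have B1 : `|pp s x i * (u xp - u yp) + pm s x i * (u xm - u ym)| <= 2 * N / h * D.
  apply: le_trans (ler_normD _ _) _.
  rewrite !normrM (ger0_norm (pp_ge0 _ _ _)) (ger0_norm (pm_ge0 _ _ _)).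
  rewrite -(ppm s x i) [X in _ <= X]mulrDl; apply: lerD; apply: ler_wpM2l;
    rewrite ?pp_ge0 ?pm_ge0 //; [exact: uD | exact: uD].
have B2 : `|(pp s x i - pp s y i) * u yp + (pm s x i - pm s y i) * u ym|
    <= Lb * Mu / h * `|x - y|.
  apply: le_trans (ler_normD _ _) _; rewrite !normrM.
  have -> : Lb * Mu / h * `|x - y| =
    Lb * `|x - y| / (2 * h) * Mu + Lb * `|x - y| / (2 * h) * Mu.
    by field; rewrite gt_eqF.
  apply: lerD; apply: ler_pM => //; rewrite ?normr_ge0 ?ppL ?pmL ?uM //.
by apply: lerD.
Qed.

Lemma a_cont x : continuous (fun s => a s x).
Proof.
apply: (@lip_cont _ _ La) => // s t; have := aL s t x x.
by rewrite subrr normr0 addr0.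
Qed.

Lemma b_cont x i : continuous (fun s => b s x 0 i).
Proof.
apply: (@lip_cont _ _ Lb) => // s t; have := bL s t x x i.
by rewrite subrr normr0 addr0.
Qed.

Lemma cI (x : R) : {for x, continuous (fun u : R => u)}.
Proof. exact: cvg_id. Qed.

Lemma expk_cont (k : R) (x : R) : {for x, continuous (fun u : R => expR (k * u))}.
Proof.
apply: (@cO _ (fun u => k * u) expR); last exact: continuous_expR.
eapply cM; [exact: cC | exact: cI].
Qed.

Lemma gint_cont w x : (forall y, continuous (fun s => w s y)) -> continuous (gint w x).
Proof.
move=> wc s; rewrite /gint /Gw /Pop.
eapply cM; first exact: expk_cont.
eapply cD; first exact: a_cont.
apply: cS => i; eapply cD; eapply cM.
- rewrite /pp; eapply cD; first exact: cC.
  eapply cM; [exact: b_cont | exact: cC].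
- exact: wc.
- rewrite /pm; eapply cB; first exact: cC.
  eapply cM; [exact: b_cont | exact: cC].
- exact: wc.
Qed.

Lemma near_cl t : 0 < t < T -> \forall s \near t, cl T s = s.
Proof.
move=> /andP[t0 tT]; apply/nbhs_ballP; exists (Num.min t (T - t)) => /=.
  by rewrite lt_min t0 subr_gt0 tT.
move=> s; rewrite /ball /= lt_min => /andP[H1 H2]; apply: cl_id.
move: H1 H2; rewrite !ltr_norml => /andP[H1 H2] /andP[H3 H4].
apply/andP; split; lra.
Qed.

Lemma expE (t : R) : expR (lam * t) * expR (- lam * t) = 1.
Proof. by rewrite -expRD -expR0; congr expR; ring. Qed.

Lemma Phi_deriv w x t : (forall y, continuous (fun s => w s y)) -> 0 < t < T ->
  is_derive t 1 (fun s => Phi w s x) (lam * Phi w t x - Gw w t x).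
Proof.
move=> wc tT.
have gc := gint_cont w x wc.
set K := expR (- lam * T) * q x + Prim (gint w x) T.
have E : \forall s \near t, expR (lam * s) * (K - Prim (gint w x) s) = Phi w s x.
  have := @near_cl t tT; apply: filterS => s E; rewrite /Phi E /K; ring.
apply: (near_eq_is_derive E).
have t1 : -1 < t by move: tT => /andP[? ?]; lra.
eapply is_derive_eq.
  eapply dM; [exact: is_derive_expk | eapply dB; [exact: dC | exact: Prim_deriv gc t1]].
rewrite /gint sub0r mulrN (mulrA (expR (lam * t))) expE mul1r.
have tT' : 0 <= t <= T by move: tT => /andP[? ?]; apply/andP; split; lra.
rewrite /Phi (cl_id T t tT') /K; ring.
Qed.

Lemma Phi_cont w x : (forall y, continuous (fun s => w s y)) ->
  continuous (fun t => Phi w t x).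
Proof.
move=> wc t; rewrite /Phi.
eapply cM.
  apply: (@cO _ (fun u => lam * cl T u) expR); last exact: continuous_expR.
  eapply cM; [exact: cC | exact: cl_cont].
eapply cD; first exact: cC.
eapply cB; first exact: cC.
apply: (@cO _ (cl T) (Prim (gint w x))); first exact: cl_cont.
apply: Prim_cont; first exact: gint_cont.
by have := cl_in T t T0; move=> /andP[? ?]; lra.
Qed.

Lemma Phi_T w x : Phi w T x = q x.
Proof.
rewrite /Phi cl_id ?lexx ?T0 // subrr addr0 mulrA -expRD.
have -> : lam * T + - lam * T = 0 by ring.
by rewrite expR0 mul1r.
Qed.

Lemma Phi_cl w t x : Phi w (cl T t) x = Phi w t x.
Proof. by rewrite /Phi cl_cl. Qed.

Definition B1 (w : R -> 'rV[R]_d -> R) := forall s y, `|w s y| <= Q + (T - cl T s) * Ma.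
Definition B2 (w : R -> 'rV[R]_d -> R) :=
  forall s y z, `|w s y - w s z| <= (Lq + (T - cl T s) * S) * `|y - z|.
Definition B3 (w : R -> 'rV[R]_d -> R) := forall s s' y, `|w s y - w s' y| <= Lt * `|s - s'|.

Lemma Mw_ge0 : 0 <= Mw.
Proof. rewrite /Mw; have := mulr_ge0 T0 Ma0; lra'. Qed.

Lemma S_ge0 : 0 <= S.
Proof.
rewrite /S; apply: addr_ge0 => //; apply: mulrn_wge0; apply: divr_ge0; last lra'.
by apply: mulr_ge0 => //; exact: Mw_ge0.
Qed.

Lemma Lt_ge0 : 0 <= Lt.
Proof.
rewrite /Lt; apply: addr_ge0 => //; apply: mulrn_wge0; apply: mulr_ge0.
  exact/ltW/lam_gt0.
exact: Mw_ge0.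
Qed.

Lemma B3_cont {w} : B3 w -> forall y, continuous (fun s => w s y).
Proof. by move=> w3 y; apply: (@lip_cont _ _ Lt); [exact: Lt_ge0| move=> s t; apply: w3]. Qed.

Lemma B1_Mw {w} : B1 w -> forall s y, `|w s y| <= Mw.
Proof.
move=> w1 s y; apply: le_trans (w1 s y) _; rewrite /Mw.
have := cl_in T s T0 => /andP[c0 c1].
have := mulr_ge0 c0 Ma0; have := Ma0; rewrite mulrBl; lra'.
Qed.

Lemma cl_open {t s} : cl T t < s < T -> cl T s = s.
Proof.
move=> /andP[H1 H2]; apply: cl_id; have := cl_in T t T0 => /andP[? ?].
apply/andP; split; lra.
Qed.

Lemma Phi_B1 {w} : B3 w -> B1 w -> B1 (Phi w).
Proof.
move=> w3 w1 t x; have wc := B3_cont w3.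
have := @est R lam T (cl T t) Q Q Ma (q x) (Prim (gint w x)) (fun s => Gw w s x)
  lam_gt0 (cl_in T t T0) Ma0 (qB x) (lexx Q).
rewrite subrr mulr0 subr0; apply.
- move=> s /andP[H1 H2]; apply: Prim_cont; first exact: gint_cont.
  by have := cl_in T t T0 => /andP[? ?]; lra.
- move=> s /andP[H1 H2]; apply: Prim_deriv; first exact: gint_cont.
  by have := cl_in T t T0 => /andP[? ?]; lra.
- move=> s Hs; rewrite /Gw; apply: le_trans (ler_normD _ _) _.
  apply: lerD; first exact: aB.
  apply: Pop_bound => z; rewrite -[in X in _ <= X](cl_open Hs); exact: w1.
Qed.

Lemma normD_same (x y z : 'rV[R]_d) : `|x + z - (y + z)| = `|x - y|.
Proof. by rewrite opprD addrACA subrr addr0. Qed.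

Lemma Phi_B2 {w} : B3 w -> B1 w -> B2 w -> B2 (Phi w).
Proof.
move=> w3 w1 w2 t x y; have wc := B3_cont w3.
have nxy := normr_ge0 (x - y).
have := @est R lam T (cl T t) (Lq * `|x - y|) (Lq * `|x - y|) (S * `|x - y|)
  (q x - q y) (fun s => Prim (gint w x) s - Prim (gint w y) s)
  (fun s => Gw w s x - Gw w s y)
  lam_gt0 (cl_in T t T0) (mulr_ge0 S_ge0 nxy) (qL x y) (lexx _).
rewrite subrr mulr0 subr0.
have -> : expR (lam * cl T t) *
    (expR (- lam * T) * (q x - q y) +
     (Prim (gint w x) T - Prim (gint w y) T -
      (Prim (gint w x) (cl T t) - Prim (gint w y) (cl T t)))) =
    Phi w t x - Phi w t y by rewrite /Phi; ring.
move=> H; apply: le_trans (H _ _ _) _.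
- move=> s /andP[H1 H2]; have s1 : -1 < s.
    by have := cl_in T t T0 => /andP[? ?]; lra.
  by eapply cB; apply: Prim_cont => //; exact: gint_cont.
- move=> s /andP[H1 H2]; have s1 : -1 < s.
    by have := cl_in T t T0 => /andP[? ?]; lra.
  eapply is_derive_eq.
    by eapply dB; apply: Prim_deriv => //; exact: gint_cont.
  by rewrite /gint mulrBr.
- move=> s Hs.
  have -> : Gw w s x - Gw w s y = (a s x - a s y) + (Pop s x (w s) - Pop s y (w s)).
    by rewrite /Gw; ring.
  apply: le_trans (ler_normD _ _) _.
  have A1 : `|a s x - a s y| <= La * `|x - y|.
    by have := aL s s x y; rewrite subrr normr0 add0r.
  have A2 := @Pop_lipx s x y (w s) ((Lq + (T - s) * S) * `|x - y|) Mw.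
  have A3 : `|Pop s x (w s) - Pop s y (w s)| <=
     lam * ((Lq + (T - s) * S) * `|x - y|) + (Lb * Mw / h) *+ d * `|x - y|.
    apply: A2; last exact: B1_Mw.
    by move=> z; have := w2 s (x + z) (y + z); rewrite normD_same (cl_open Hs).
  apply: le_trans (lerD A1 A3) _.
  by rewrite /S; apply: eqle; ring.
- by apply: eqle; ring.
Qed.

Lemma Phi_contr {v w D} : B3 v -> B3 w -> (forall s y, `|v s y - w s y| <= D) ->
  forall t x, `|Phi v t x - Phi w t x| <= th * D.
Proof.
move=> v3 w3 vwD t x.
have vc := B3_cont v3; have wc := B3_cont w3.
have D0 : 0 <= D by apply: le_trans (vwD 0 0); exact: normr_ge0.
have := @est R lam T (cl T t) 0 D 0 0
  (fun s => Prim (gint v x) s - Prim (gint w x) s)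
  (fun s => Gw v s x - Gw w s x)
  lam_gt0 (cl_in T t T0) (lexx 0) _ D0.
rewrite normr0 => /(_ (lexx 0)).
have -> : expR (lam * cl T t) *
    (expR (- lam * T) * 0 +
     (Prim (gint v x) T - Prim (gint w x) T -
      (Prim (gint v x) (cl T t) - Prim (gint w x) (cl T t)))) =
    Phi v t x - Phi w t x by rewrite /Phi; ring.
move=> H; apply: le_trans (H _ _ _) _.
- move=> s /andP[H1 H2]; have s1 : -1 < s.
    by have := cl_in T t T0 => /andP[? ?]; lra.
  by eapply cB; apply: Prim_cont => //; exact: gint_cont.
- move=> s /andP[H1 H2]; have s1 : -1 < s.
    by have := cl_in T t T0 => /andP[? ?]; lra.
  eapply is_derive_eq.
    by eapply dB; apply: Prim_deriv => //; exact: gint_cont.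
  by rewrite /gint mulrBr.
- move=> s Hs.
  have -> : Gw v s x - Gw w s x = Pop s x (fun z => v s z - w s z).
    by rewrite /Gw -Pop_sub; ring.
  apply: le_trans (@Pop_bound s x (fun z => v s z - w s z) D (vwD s)) _.
  by apply: eqle; ring.
- have := cl_in T t T0 => /andP[c0 c1].
  have E : expR (- lam * T) <= expR (- lam * (T - cl T t)).
    rewrite ler_expR; have := mulr_ge0 (ltW lam_gt0) c0; lra.
  have := ler_wpM2r D0 E; rewrite /th; lra.
Qed.

Lemma Phi_B3 {w} : B3 w -> B1 w -> B3 (Phi w).
Proof.
move=> w3 w1; have wc := B3_cont w3.
have P1 := Phi_B1 w3 w1.
have Lt0 := Lt_ge0.
suff H : forall x s t, 0 <= s -> s <= t -> t <= T ->
    `|Phi w t x - Phi w s x| <= Lt * (t - s).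
  move=> t s x; rewrite -Phi_cl -[Phi w s x]Phi_cl.
  have := cl_lip T t s; have := cl_in T t T0; have := cl_in T s T0.
  move=> /andP[s0 sT] /andP[t0 tT] cl1.
  have [st|st] := leP (cl T s) (cl T t).
    apply: le_trans (H x _ _ s0 st tT) _; apply: ler_wpM2l => //.
    by apply: le_trans cl1; rewrite ger0_norm ?subr_ge0.
  rewrite distrC; apply: le_trans (H x _ _ t0 (ltW st) sT) _.
  apply: ler_wpM2l => //; apply: le_trans cl1.
  by rewrite distrC ger0_norm // subr_ge0 ltW.
move=> x s t s0 st tT.
have dP : forall u, s < u < t -> `|lam * Phi w u x - Gw w u x| <= Lt.
  move=> u _; apply: le_trans (ler_normB _ _) _; rewrite /Lt /Gw mulr2n.
  have := B1_Mw P1 u x => PM.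
  have B : `|a u x + Pop u x (w u)| <= Ma + lam * Mw.
    apply: le_trans (ler_normD _ _) _; apply: lerD; first exact: aB.
    by apply: Pop_bound => z; exact: B1_Mw.
  rewrite normrM (gtr0_norm lam_gt0).
  have := ler_wpM2l (ltW lam_gt0) PM; lra.
have inT : forall u, s < u < t -> 0 < u < T.
  by move=> u /andP[? ?]; apply/andP; split; lra.
have K1 : Phi w t x - Lt * t <= Phi w s x - Lt * s.
  apply: (@cmp_deriv _ (fun u => Phi w u x - Lt * u)
     (fun u => (lam * Phi w u x - Gw w u x) - Lt)) => //.
  - move=> u _; eapply cB; first exact: Phi_cont.
    eapply cM; [exact: cC| exact: cI].
  - move=> u Hu; eapply is_derive_eq.
      eapply dB; first exact: Phi_deriv (inT _ Hu).
      eapply dM; [exact: dC | exact: dI].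
    by rewrite mulr1 mulr0 addr0.
  - move=> u Hu; have := dP u Hu; have := ler_norm (lam * Phi w u x - Gw w u x).
    lra.
have K2 : - Phi w t x - Lt * t <= - Phi w s x - Lt * s.
  apply: (@cmp_deriv _ (fun u => - Phi w u x - Lt * u)
     (fun u => - (lam * Phi w u x - Gw w u x) - Lt)) => //.
  - move=> u _; eapply cB; first by eapply cN; exact: Phi_cont.
    eapply cM; [exact: cC| exact: cI].
  - move=> u Hu; eapply is_derive_eq.
      eapply dB; first by eapply dN; exact: Phi_deriv (inT _ Hu).
      eapply dM; [exact: dC | exact: dI].
    by rewrite mulr1 mulr0 addr0.
  - move=> u Hu; have := dP u Hu.
    have : - (lam * Phi w u x - Gw w u x) <= `|lam * Phi w u x - Gw w u x|.
      by rewrite -normrN ler_norm.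
    lra.
rewrite ler_norml; apply/andP; split; lra.
Qed.

Fixpoint it (k : nat) : R -> 'rV[R]_d -> R :=
  if k is k'.+1 then Phi (it k') else fun _ _ => 0.

Lemma it_good k : B1 (it k) /\ B2 (it k) /\ B3 (it k).
Proof.
elim: k => [|k [I1 [I2 I3]]] /=.
  split; [|split].
  - move=> s y; rewrite normr0; have := cl_in T s T0 => /andP[? ?].
    by apply: addr_ge0 => //; apply: mulr_ge0 => //; lra.
  - move=> s y z; rewrite subrr normr0; apply: mulr_ge0 => //.
    have := cl_in T s T0 => /andP[? ?].
    by apply: addr_ge0 => //; apply: mulr_ge0; [lra| exact: S_ge0].
  - move=> s s' y; rewrite subrr normr0; apply: mulr_ge0 => //; exact: Lt_ge0.
split; [exact: Phi_B1|split; [exact: Phi_B2| exact: Phi_B3]].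
Qed.

Lemma th_range : 0 <= th < 1.
Proof.
rewrite /th; have := expR_gt0 (- lam * T).
have : expR (- lam * T) <= 1.
  rewrite expR_le1; have := mulr_ge0 (ltW lam_gt0) T0; lra.
move=> H1 H2; apply/andP; split; lra.
Qed.

Lemma it_step k s y : `|it k.+1 s y - it k s y| <= Mw *+ 2 * th ^+ k.
Proof.
elim: k s y => [|k IH] s y.
  rewrite expr0 mulr1 /= subr0.
  have [I1 _] := it_good 1; have := B1_Mw I1 s y; have := Mw_ge0.
  rewrite mulr2n /=; lra.
have [_ [_ I3]] := it_good k; have [_ [_ I3']] := it_good k.+1.
have := Phi_contr I3' I3 IH s y; rewrite /= exprS.
by rewrite mulrCA.
Qed.

Definition V t x := limn (fun k => it k t x).
Definition eps (k : nat) := Mw *+ 2 * th ^+ k / (1 - th).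

Lemma V_close k t x : `|V t x - it k t x| <= eps k.
Proof.
rewrite /V /eps; apply: (@geo_lim _ (fun k => it k t x) (Mw *+ 2) th th_range).
  by apply: mulrn_wge0; exact: Mw_ge0.
by move=> j; exact: it_step.
Qed.

Lemma eps_form k : eps k = Mw *+ 2 / (1 - th) * th ^+ k.
Proof. rewrite /eps; ring. Qed.

Lemma V_B1 : B1 V.
Proof.
move=> s y; apply: (@lim_le _ _ _ (Mw *+ 2 / (1 - th)) th th_range) => k.
have [I1 _] := it_good k; have := I1 s y; have := V_close k s y.
rewrite -eps_form; have := ler_normB (V s y) (it k s y).
have := ler_normD (V s y - it k s y) (it k s y); rewrite subrK; lra.
Qed.

Lemma V_B2 : B2 V.
Proof.
move=> s y z; apply: (@lim_le _ _ _ (Mw *+ 2 / (1 - th) *+ 2) th th_range) => k.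
have [_ [I2 _]] := it_good k; have := I2 s y z.
have := V_close k s y; have := V_close k s z; rewrite mulrnAl -eps_form.
have E : V s y - V s z = (V s y - it k s y) - (V s z - it k s z)
   + (it k s y - it k s z) by ring.
rewrite E => h1 h2 h3.
apply: le_trans (ler_normD _ _) _; apply: le_trans (lerD (ler_normB _ _) (lexx _)) _.
rewrite mulr2n; lra.
Qed.

Lemma V_B3 : B3 V.
Proof.
move=> s s' y; apply: (@lim_le _ _ _ (Mw *+ 2 / (1 - th) *+ 2) th th_range) => k.
have [_ [_ I3]] := it_good k; have := I3 s s' y.
have := V_close k s y; have := V_close k s' y; rewrite mulrnAl -eps_form.
have E : V s y - V s' y = (V s y - it k s y) - (V s' y - it k s' y)
   + (it k s y - it k s' y) by ring.
rewrite E => h1 h2 h3.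
apply: le_trans (ler_normD _ _) _; apply: le_trans (lerD (ler_normB _ _) (lexx _)) _.
rewrite mulr2n; lra.
Qed.

Lemma V_fix t x : Phi V t x = V t x.
Proof.
apply/eqP; rewrite -subr_eq0 -normr_le0.
apply: (@lim_le _ _ _ (Mw *+ 2 / (1 - th) *+ 2) th th_range) => k.
have [_ [_ I3]] := it_good k.
have C1 := Phi_contr V_B3 I3 (fun s y => V_close k s y) t x.
have C2 := V_close k.+1 t x.
have E : Phi V t x - V t x = (Phi V t x - it k.+1 t x) - (V t x - it k.+1 t x) by ring.
rewrite E; apply: le_trans (ler_normB _ _) _.
have [th0 th1] : 0 <= th /\ th < 1 by have := th_range => /andP[].
have ep0 : 0 <= eps k.
  by rewrite /eps; apply: divr_ge0; [apply: mulr_ge0; [apply: mulrn_wge0; exact: Mw_ge0| exact: exprn_ge0]| lra].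
have e1 : eps k.+1 <= eps k.
  rewrite !eps_form exprS mulrCA ler_piMl //; last lra.
  by rewrite -eps_form.
have e2 : th * eps k <= eps k by rewrite ler_piMl //; lra.
rewrite add0r mulrnAl -eps_form mulr2n.
move: C1 C2; rewrite /=; lra.
Qed.

Lemma Pop_id s x (phi : 'rV[R]_d -> R) :
  Pop s x phi = dotv (dgrad h phi x) (b s x) + N * h * dlap h phi x + lam * phi x.
Proof.
rewrite /Pop /dotv /dlap /dgrad sum_const_lam mulr_sumr -!big_split /=.
apply: eq_bigr => i _; rewrite mxE /pp /pm; field.
by rewrite gt_eqF.
Qed.

Lemma ode_exists : exists v : R -> 'rV[R]_d -> R,
  (forall t x, 0 < t < T -> is_derive t 1 (fun s => v s x)
     (- (a t x + dotv (dgrad h (v t) x) (b t x) + N * h * dlap h (v t) x))) /\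
  (forall x, v T x = q x) /\ (forall t x, `|v t x| <= Q + T * Ma) /\
  (exists L, forall t s x y, `|v t x - v s y| <= L * (`|t - s| + `|x - y|)).
Proof.
exists V; split; [|split; [|split]].
- move=> t x tT.
  have wc := B3_cont V_B3.
  have := @Phi_deriv V x t wc tT.
  have -> : (fun s => Phi V s x) = (fun s => V s x).
    by apply/funext => s; rewrite V_fix.
  rewrite V_fix => H; eapply is_derive_eq; first exact: H.
  by rewrite /Gw Pop_id; ring.
- by move=> x; rewrite -V_fix Phi_T.
- by move=> t x; have := B1_Mw V_B1 t x.
- exists (Lt + (Lq + T * S)) => t s x y.
  have E : V t x - V s y = (V t x - V s x) + (V s x - V s y) by ring.
  rewrite E; apply: le_trans (ler_normD _ _) _.
  have H1 := V_B3 t s x; have H2 := V_B2 s x y.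
  have H3 : (Lq + (T - cl T s) * S) * `|x - y| <= (Lq + T * S) * `|x - y|.
    apply: ler_wpM2r; first exact: normr_ge0.
    have := cl_in T s T0 => /andP[c0 _]; have := mulr_ge0 c0 S_ge0.
    rewrite mulrBl; lra.
  have K0 : 0 <= Lq + T * S by apply: addr_ge0 => //; apply: mulr_ge0 => //; exact: S_ge0.
  apply: le_trans (lerD H1 (le_trans H2 H3)) _.
  have := mulr_ge0 Lt_ge0 (normr_ge0 (x - y)); have := mulr_ge0 K0 (normr_ge0 (t - s)).
  set K := Lq + T * S; set A := `|t - s|; set B := `|x - y|.
  rewrite mulrDr !mulrDl; lra.
Qed.

End PC.

Section PD.
Context {R : realType}.

Lemma entry_le d (M : 'rV[R]_d) i : `|M 0 i| <= `|M|.
Proof.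
rewrite (_ : `|M| = mx_norm M) // mx_normrE.
exact: (le_bigmax _ (fun ij : 'I_1 * 'I_d => `|M ij.1 ij.2|) (0, i)).
Qed.

Lemma norm_le d (M : 'rV[R]_d) c : 0 <= c -> (forall i, `|M 0 i| <= c) -> `|M| <= c.
Proof.
move=> c0 H; rewrite (_ : `|M| = mx_norm M) // mx_normrE.
apply: bigmax_le => // [[i j]] _ /=; rewrite (ord1 i); exact: H.
Qed.

Lemma eucl_entry d (v : 'rV[R]_d) i : `|v 0 i| <= eucl v.
Proof.
rewrite /eucl /dotv -sqrtr_sqr ler_sqrt; last first.
  by apply: sumr_ge0 => j _; rewrite -expr2 sqr_ge0.
rewrite (bigD1 i) //= expr2 lerDl.
by apply: sumr_ge0 => j _; rewrite -expr2 sqr_ge0.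
Qed.

Lemma kle (k X : R) : 0 <= X -> k * X <= `|k| * X.
Proof. by move=> X0; apply: ler_wpM2r => //; exact: ler_norm. Qed.

Lemma kle2 (k X Y : R) : 0 <= X -> `|k| * X <= Y -> k * X <= Y.
Proof. by move=> X0; apply: le_trans; exact: kle. Qed.

End PD.

Theorem proposition2p2 (R : realType) (d m : nat) (T : R)
  (A : set 'rV[R]_m)
  (c : R -> 'rV[R]_d -> 'rV[R]_m -> R)
  (f : R -> 'rV[R]_d -> 'rV[R]_m -> 'rV[R]_d)
  (q : 'rV[R]_d -> R)
  (alpha : R -> 'rV[R]_d -> 'rV[R]_d -> 'rV[R]_m)
  (alpha0 : R -> 'rV[R]_d -> 'rV[R]_m)
  (N : R) :
  (1 <= d)%N -> (1 <= m)%N -> 1 <= T ->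
  compact A ->
  (* alpha(t,x,p) is the unique minimizer over A of c(t,x,a) + p . f(t,x,a) *)
  (forall t x p, 0 <= t <= T ->
     A (alpha t x p) /\
     (forall a, A a -> a <> alpha t x p ->
        c t x (alpha t x p) + dotv p (f t x (alpha t x p))
          < c t x a + dotv p (f t x a))) ->
  (* (A1) *)
  bnd3 (fun t => 0 <= t <= T) A c ->
  bnd3 (fun t => 0 <= t <= T) A f ->
  (exists M : R, forall x, `|q x| <= M) ->
  lip3 (fun t => 0 <= t <= T) A c ->
  lip3 (fun t => 0 <= t <= T) A f ->
  lip1 q ->
  (* (A2) *)
  lip3 (fun t => 0 <= t <= T) (fun _ => True) alpha ->
  (forall t x, A (alpha0 t x)) ->
  continuous (fun p : R * 'rV[R]_d => alpha0 p.1 p.2) ->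
  lip2 (fun _ => True) alpha0 ->
  (* N >= max {1, ||f||_oo / 2} *)
  1 <= N ->
  (forall t x a, 0 <= t <= T -> A a -> eucl (f t x a) <= 2 * N) ->
  exists C : R, forall h : R, 0 < h < 1 ->
    exists (v : nat -> R -> 'rV[R]_d -> R) (pol : nat -> R -> 'rV[R]_d -> 'rV[R]_m),
      pol 0%N = alpha0 /\
      (forall n, lip2 (fun t => 0 <= t <= T) (v n)) /\
      (forall n, lip2 (fun t => 0 < t < T) (pol n)) /\
      (forall n t x, 0 < t < T ->
         is_derive t 1 (fun s => v n s x)
           (- (c t x (pol n t x) + dotv (dgrad h (v n t) x) (f t x (pol n t x))
               + N * h * dlap h (v n t) x))) /\
      (forall n x, v n T x = q x) /\
      (forall n t x, 0 < t < T -> pol n.+1 t x = alpha t x (dgrad h (v n t) x)) /\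
      (forall n t x, 0 <= t <= T -> `|v n t x| <= C).
Proof.
move=> hd hm hT cA Halpha [Mc cB] _ [Mq qB] [kc cL] [kf fL] [kq qL] [ka aL]
  a0A a0C [k0 a0L] N1 fN.
set Qm := Num.max Mq 0; set Ma := Num.max Mc 0.
have Qm0 : 0 <= Qm by rewrite le_max lexx orbT.
have Ma0 : 0 <= Ma by rewrite le_max lexx orbT.
exists (Qm + T * Ma) => h /andP[h0 h1].
have T0 : 0 <= T by lra.
have N0 : 0 < N by lra.
pose goodp (p : R -> 'rV[R]_d -> 'rV[R]_m) := (forall s x, A (p s x)) /\
  exists K, 0 <= K /\ forall s s' x x', `|p s x - p s' x'| <= K * (`|s - s'| + `|x - x'|).
pose odeP (p : R -> 'rV[R]_d -> 'rV[R]_m) (v : R -> 'rV[R]_d -> R) :=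
  (forall t x, 0 < t < T -> is_derive t 1 (fun s => v s x)
     (- (c t x (p t x) + dotv (dgrad h (v t) x) (f t x (p t x))
         + N * h * dlap h (v t) x))) /\
  (forall x, v T x = q x) /\ (forall t x, `|v t x| <= Qm + T * Ma) /\
  (exists L, 0 <= L /\ forall t s x y, `|v t x - v s y| <= L * (`|t - s| + `|x - y|)).
have solve : forall p, exists v, goodp p -> odeP p v.
  move=> p; case: (pselect (goodp p)) => gp; last by exists (fun _ _ => 0).
  have [pA [K [K0 pL]]] := gp.
  have E0 : forall (s s' : R) (x x' : 'rV[R]_d), 0 <= `|s - s'| + `|x - x'|.
    by move=> s s' x x'; apply: addr_ge0; exact: normr_ge0.
  have LE : forall (s s' : R) (x x' : 'rV[R]_d),
      `|cl T s - cl T s'| + `|x - x'| + `|p s x - p s' x'|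
        <= (1 + K) * (`|s - s'| + `|x - x'|).
    move=> s s' x x'; have := cl_lip T s s'; have := pL s s' x x'.
    rewrite mulrDl mul1r; lra.
  have := @ode_exists R d T N h Qm `|kq| Ma (`|kc| * (1 + K)) (`|kf| * (1 + K))
    (fun s x => c (cl T s) x (p s x)) (fun s x => f (cl T s) x (p s x)) q
    T0 N0 h0 hd Qm0 (normr_ge0 _) Ma0 _ _ _ _ _ _ _ _.
  case.
  - by apply: mulr_ge0 => //; lra.
  - by apply: mulr_ge0 => //; lra.
  - by move=> x; apply: le_trans (qB x) _; rewrite le_max lexx.
  - move=> x y; apply: le_trans (qL x y) _; apply: kle; exact: normr_ge0.
  - move=> s x; apply: le_trans (cB _ _ _ (cl_in T s T0) (pA s x)) _.
    by rewrite le_max lexx.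
  - move=> s s' x x'.
    apply: le_trans (cL _ _ _ _ _ _ (cl_in T s T0) (cl_in T s' T0) (pA s x) (pA s' x')) _.
    apply: kle2.
      by apply: addr_ge0; [apply: addr_ge0| ]; exact: normr_ge0.
    rewrite -mulrA; apply: ler_wpM2l => //; exact: LE.
  - move=> s x i; apply: le_trans (eucl_entry _ _ _) _.
    exact: fN (cl_in T s T0) (pA s x).
  - move=> s s' x x' i.
    have -> : f (cl T s) x (p s x) 0 i - f (cl T s') x' (p s' x') 0 i =
       (f (cl T s) x (p s x) - f (cl T s') x' (p s' x')) 0 i by rewrite !mxE.
    apply: le_trans (entry_le _ _ _) _.
    apply: le_trans (fL _ _ _ _ _ _ (cl_in T s T0) (cl_in T s' T0) (pA s x) (pA s' x')) _.
    apply: kle2.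
      by apply: addr_ge0; [apply: addr_ge0| ]; exact: normr_ge0.
    rewrite -mulrA; apply: ler_wpM2l => //; exact: LE.
  move=> v [vd [vT [vB [L vL]]]]; exists v => _.
  split; [|split; [exact: vT|split; [exact: vB|]]].
    move=> t x tT; have := vd t x tT.
    have tT' : 0 <= t <= T by move: tT => /andP[? ?]; apply/andP; split; lra.
    by rewrite (cl_id T t tT').
  exists `|L|; split; first exact: normr_ge0.
  move=> t s x y; apply: le_trans (vL t s x y) _; apply: kle.
  by apply: addr_ge0; exact: normr_ge0.
have [sol solP] := choice solve.
pose nextp (v : R -> 'rV[R]_d -> R) : R -> 'rV[R]_d -> 'rV[R]_m :=
  fun t x => alpha (cl T t) x (dgrad h (v (cl T t)) x).
pose fix polf (n : nat) := if n is n'.+1 then nextp (sol (polf n')) else alpha0.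
have good : forall n, goodp (polf n).
  elim => [|n IH].
    split; first exact: a0A.
    exists `|k0|; split; first exact: normr_ge0.
    move=> s s' x x'; apply: le_trans (a0L s s' x x' I I) _; apply: kle.
    by apply: addr_ge0; exact: normr_ge0.
  have [_ [_ [_ [L0 [L00 vL]]]]] := solP _ IH.
  set v := sol (polf n) in vL *.
  split.
    by move=> s x; rewrite /= /nextp; have [] := Halpha (cl T s) x
      (dgrad h (v (cl T s)) x) (cl_in T s T0).
  exists (`|ka| * (1 + L0 / h)); split.
    by apply: mulr_ge0 => //; apply: addr_ge0 => //; apply: divr_ge0 => //; lra.
  move=> s s' x x'; rewrite /= /nextp -/v.
  have E0 : 0 <= `|s - s'| + `|x - x'| by apply: addr_ge0; exact: normr_ge0.
  have DG : `|dgrad h (v (cl T s)) x - dgrad h (v (cl T s')) x'|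
      <= L0 / h * (`|s - s'| + `|x - x'|).
    apply: norm_le; first by apply: mulr_ge0 => //; apply: divr_ge0 => //; lra.
    move=> i; rewrite !mxE.
    set xp := x + h *: ev i; set xm := x - h *: ev i.
    set yp := x' + h *: ev i; set ym := x' - h *: ev i.
    have -> : (v (cl T s) xp - v (cl T s) xm) / (2 * h) -
        (v (cl T s') yp - v (cl T s') ym) / (2 * h) =
        ((v (cl T s) xp - v (cl T s') yp) - (v (cl T s) xm - v (cl T s') ym)) / (2 * h).
      by field; lra.
    have h2 : 0 < 2 * h by lra.
    rewrite normrM [`|(2 * h)^-1|]ger0_norm; last by rewrite invr_ge0 ltW.
    have B1 : `|v (cl T s) xp - v (cl T s') yp| <= L0 * (`|s - s'| + `|x - x'|).
      apply: le_trans (vL _ _ _ _) _; rewrite /xp /yp normD_same.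
      by apply: ler_wpM2l => //; apply: lerD => //; exact: cl_lip.
    have B2 : `|v (cl T s) xm - v (cl T s') ym| <= L0 * (`|s - s'| + `|x - x'|).
      apply: le_trans (vL _ _ _ _) _; rewrite /xm /ym normD_same.
      by apply: ler_wpM2l => //; apply: lerD => //; exact: cl_lip.
    have B3 := ler_normB (v (cl T s) xp - v (cl T s') yp) (v (cl T s) xm - v (cl T s') ym).
    have -> : L0 / h * (`|s - s'| + `|x - x'|) =
       (L0 * (`|s - s'| + `|x - x'|) + L0 * (`|s - s'| + `|x - x'|)) / (2 * h).
      by field; lra.
    apply: ler_wpM2r; first by rewrite invr_ge0 ltW.
    lra.
  apply: le_trans (aL _ _ _ _ _ _ (cl_in T s T0) (cl_in T s' T0) I I) _.
  apply: kle2.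
    by apply: addr_ge0; [apply: addr_ge0|]; exact: normr_ge0.
  rewrite -mulrA; apply: ler_wpM2l => //.
  have := cl_lip T s s'; rewrite mulrDl mul1r; lra.
exists (fun n => sol (polf n)), polf.
split; first by [].
have SP := fun n => solP _ (good n).
split.
  move=> n; have [_ [_ [_ [L [_ vL]]]]] := SP n.
  by exists L => t s x y _ _; exact: vL.
split.
  move=> n; have [_ [K [_ pL]]] := good n.
  by exists K => t s x y _ _; exact: pL.
split.
  by move=> n t x tT; have [D _] := SP n; exact: D.
split.
  by move=> n x; have [_ [D _]] := SP n; exact: D.
split.
  move=> n t x tT; rewrite /= /nextp.
  have tT' : 0 <= t <= T by move: tT => /andP[? ?]; apply/andP; split; lra.
  by rewrite (cl_id T t tT').
by move=> n t x _; have [_ [_ [D _]]] := SP n; exact: D.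
Qed.
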